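(* Let $b_1,\dots,b_N\in(0,1)$ and $c_1,c_2>0$ with $b_ib_j<1$, $b_ic_1<1$, $b_ic_2<1$ for all $i,j$. Then $\mathbb E^{\boldsymbol b,\boldsymbol b}_{\mathrm{GRW}}\big[V(\mathbf L)\big]<\infty$, where $V(\mathbf L)=(c_1c_2)^{\max_{1\le j\le N}(L_2(j)-L_1(j-1))}c_2^{L_1(N)-L_2(N)}$.
   Context: Under $\mathbb P^{\boldsymbol b,\boldsymbol b}_{\mathrm{GRW}}$, $\mathbf L_1=(L_1(j))_{0\le j\le N}$ and $\mathbf L_2=(L_2(j))_{0\le j\le N}$ are independent random walks with $L_1(0)=L_2(0)=0$ and independent increments $L_i(j)-L_i(j-1)\sim\mathrm{Geom}(b_j)$, where $\mathbb P(\mathrm{Geom}(q)=n)=(1-q)q^n$, $n\in\mathbb Z_{\ge0}$; $\mathbf L=(\mathbf L_1,\mathbf L_2)$. *)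

(* Defs.v *)
From HB Require Import structures.
From mathcomp Require Import all_boot all_order all_algebra.
From mathcomp Require Import all_classical all_reals.
From mathcomp Require Import ereal esum.
Set Implicit Arguments. Unset Strict Implicit. Unset Printing Implicit Defensive.
Import Order.TTheory GRing.Theory Num.Theory.
Local Open Scope ring_scope.

Section GRW.
Variables (R : realType) (N : nat).

Definition geom_pmf (q : R) (n : nat) : R := (1 - q) * q ^+ n.

(* An outcome of one walk = its increment sequence x : 'I_N -> nat,
   x i = L(i+1) - L(i).  L(j) = sum of the first j increments, L(0)=0. *)
Definition walk (x : {ffun 'I_N -> nat}) (j : nat) : nat :=
  \sum_(i < N | (i < j)%N) x i.

(* probability of the increment sequence x under independent
   increments L(j)-L(j-1) ~ Geom(b_j) (b_j is b (j-1) here) *)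
Definition walk_prob (b : 'I_N -> R) (x : {ffun 'I_N -> nat}) : R :=
  \prod_(i < N) geom_pmf (b i) (x i).

(* max_{1<=j<=N} (L2(j) - L1(j-1)), as an integer (for N >= 1; the seed is
   the j = 1 term, which is also included in the range, so it is harmless) *)
Definition max_gap (x1 x2 : {ffun 'I_N -> nat}) : int :=
  \big[Num.max/ ((walk x2 1)%:Z - (walk x1 0)%:Z)]_(1 <= j < N.+1)
     ((walk x2 j)%:Z - (walk x1 j.-1)%:Z).

Definition V (c1 c2 : R) (x1 x2 : {ffun 'I_N -> nat}) : R :=
  (c1 * c2) ^ (max_gap x1 x2) * c2 ^ ((walk x1 N)%:Z - (walk x2 N)%:Z).

(* E^{b,b}_GRW [ V(L) ] : expectation of a nonnegative function under the
   discrete law of the pair of independent walks, as a sum in \bar R *)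
Definition E_GRW_V (b : 'I_N -> R) (c1 c2 : R) : \bar R :=
  \esum_(x in [set: {ffun 'I_N -> nat} * {ffun 'I_N -> nat}])
     ((walk_prob b x.1 * walk_prob b x.2 * V c1 c2 x.1 x.2)%:E).

End GRW.

(* Main.v *)
Require Import Defs.
From HB Require Import structures.
From mathcomp Require Import all_boot all_order all_algebra.
From mathcomp Require Import all_classical all_reals.
From mathcomp Require Import ereal esum.
From mathcomp Require Import zify ring lra.
Import Order.TTheory GRing.Theory Num.Theory.
Local Open Scope ring_scope.

Section Aux.
Variables (R : realType) (N : nat).

Lemma walk_le (x : {ffun 'I_N -> nat}) j : (walk x j <= walk x N)%N.
Proof.
rewrite /walk (big_mkcond (fun i : 'I_N => (i < j)%N)) (big_mkcond (fun i : 'I_N => (i < N)%N)).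
apply: leq_sum => i _; rewrite ltn_ord; by case: ifP.
Qed.

Lemma walk0 (x : {ffun 'I_N -> nat}) : walk x 0 = 0%N.
Proof. by rewrite /walk big_pred0 // => i; rewrite ltn0. Qed.

Lemma walkN (x : {ffun 'I_N -> nat}) : walk x N = (\sum_(i < N) x i)%N.
Proof. by rewrite /walk; apply: eq_bigl => i; rewrite ltn_ord. Qed.

Lemma bigmax_props (r : seq nat) (F : nat -> int) (x : int) :
  x <= \big[Num.max/x]_(j <- r) F j /\
  forall j, j \in r -> F j <= \big[Num.max/x]_(j <- r) F j.
Proof.
elim: r => [|a r [IH1 IH2]]; first by rewrite big_nil.
rewrite big_cons; split.
  by rewrite le_max IH1 orbT.
move=> j; rewrite inE => /orP [/eqP ->|jr]; first by rewrite le_max lexx.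
by rewrite le_max IH2 ?orbT.
Qed.

Lemma max_gap_bounds (x1 x2 : {ffun 'I_N -> nat}) : (0 < N)%N ->
  [/\ 0 <= max_gap x1 x2, (walk x2 N)%:Z - (walk x1 N)%:Z <= max_gap x1 x2
    & max_gap x1 x2 <= (walk x2 N)%:Z].
Proof.
move=> N0.
have [H1 H2] := bigmax_props (index_iota 1 N.+1)
   (fun j => (walk x2 j)%:Z - (walk x1 j.-1)%:Z) ((walk x2 1)%:Z - (walk x1 0)%:Z).
rewrite /max_gap; split.
- apply: le_trans H1; rewrite walk0; lia.
- have := H2 N; rewrite mem_index_iota N0 ltnSn => /(_ isT).
  apply: le_trans.
  have := walk_le x1 N.-1; lia.
- rewrite big_seq; apply: (big_ind (fun m => m <= (walk x2 N)%:Z)).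
  + rewrite walk0; have := walk_le x2 1; lia.
  + by move=> a c ha hc; rewrite ge_max ha hc.
  + move=> j _; have := walk_le x2 j; lia.
Qed.

Lemma V_bound (c1 c2 : R) (x1 x2 : {ffun 'I_N -> nat}) : (0 < N)%N ->
  0 < c1 -> 0 < c2 ->
  V c1 c2 x1 x2 <= (Num.max 1 c1) ^+ (walk x2 N) * (Num.max 1 c2) ^+ (walk x1 N).
Proof.
move=> N0 c10 c20.
have [Ha Hb Hc] := max_gap_bounds x1 x2 N0.
rewrite /V.
set M := max_gap x1 x2 in Ha Hb Hc *.
have [m Hm] : exists m : nat, M = m%:Z by exists (absz M); lia.
have [m' Hm'] : exists m' : nat, M + ((walk x1 N)%:Z - (walk x2 N)%:Z) = m'%:Z.
  by exists (absz (M + ((walk x1 N)%:Z - (walk x2 N)%:Z))); lia.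
have e : (c1 * c2) ^ M * c2 ^ ((walk x1 N)%:Z - (walk x2 N)%:Z) = c1 ^+ m * c2 ^+ m'.
  rewrite Hm; have -> : (c1 * c2) ^ (m%:Z) = (c1 * c2) ^+ m by [].
  rewrite exprMn -mulrA; congr (_ * _).
  have -> : c2 ^+ m = c2 ^ (m%:Z) by [].
  by rewrite -expfzDr ?gt_eqF // -Hm Hm'.
rewrite e.
have mle : (m <= walk x2 N)%N by lia.
have m'le : (m' <= walk x1 N)%N by lia.
have c1le : c1 <= Num.max 1 c1 by rewrite le_max lexx orbT.
have c2le : c2 <= Num.max 1 c2 by rewrite le_max lexx orbT.
have c1ge : 1 <= Num.max 1 c1 by rewrite le_max lexx.
have c2ge : 1 <= Num.max 1 c2 by rewrite le_max lexx.
apply: ler_pM; [exact: exprn_ge0 (ltW c10) | exact: exprn_ge0 (ltW c20) | | ].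
- apply: (le_trans _ (ler_weXn2l c1ge mle)).
  apply: lerXn2r => //; rewrite nnegrE; [exact: ltW | exact: le_trans ler01 _]; done.
- apply: (le_trans _ (ler_weXn2l c2ge m'le)).
  apply: lerXn2r => //; rewrite nnegrE; [exact: ltW | exact: le_trans ler01 _]; done.
Qed.


Lemma geom_sum_le (q : R) (n : nat) : 0 <= q < 1 ->
  \sum_(k < n) q ^+ k <= (1 - q)^-1.
Proof.
move=> /andP [q0 q1].
have h : (1 - q) * \sum_(k < n) q ^+ k = 1 - q ^+ n.
  by rewrite -opprB mulNr -subrX1 opprB.
have pos : 0 < 1 - q by rewrite subr_gt0.
rewrite -[X in X <= _](mulKf (lt0r_neq0 pos)) h.
rewrite -[X in _ <= X]mulr1 ler_pM2l ?invr_gt0 //.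
rewrite lerBlDr lerDl; exact: exprn_ge0.
Qed.

Definition emb (n : nat) (y : {ffun 'I_N -> 'I_n}) : {ffun 'I_N -> nat} :=
  [ffun i => nat_of_ord (y i)].
Arguments emb {n}.

Definition Kc (b : 'I_N -> R) (C : R) : R := \prod_(i < N) ((1 - b i) / (1 - b i * C)).

Lemma walk_prob_ge0 (b : 'I_N -> R) x : (forall i, 0 < b i < 1) -> 0 <= walk_prob b x.
Proof.
move=> hb; apply: prodr_ge0 => i _; rewrite /geom_pmf.
have /andP [h0 h1] := hb i.
by apply: mulr_ge0; [rewrite subr_ge0 ltW | rewrite exprn_ge0 // ltW].
Qed.

Lemma box_bound (b : 'I_N -> R) (C : R) (n : nat) :
  (forall i, 0 < b i < 1) -> 0 <= C -> (forall i, b i * C < 1) ->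
  \sum_(y : {ffun 'I_N -> 'I_n}) walk_prob b (emb y) * C ^+ (walk (emb y) N) <= Kc b C.
Proof.
move=> hb C0 hbC.
have e : forall y : {ffun 'I_N -> 'I_n}, walk_prob b (emb y) * C ^+ (walk (emb y) N)
   = \prod_(i < N) ((1 - b i) * (b i * C) ^+ (y i)).
  move=> y; rewrite walkN expr_sum /walk_prob -big_split /=.
  apply: eq_bigr => i _; rewrite /geom_pmf /emb ffunE exprMn; ring.
rewrite (eq_bigr _ (fun y _ => e y)).
rewrite -(bigA_distr_bigA (fun (i : 'I_N) (k : 'I_n) => (1 - b i) * (b i * C) ^+ k)) /=.
apply: ler_prod => i _.
have /andP [h0 h1] := hb i.
have q0 : 0 <= b i * C by apply: mulr_ge0 => //; exact: ltW.
apply/andP; split.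
  apply: sumr_ge0 => k _; apply: mulr_ge0; [by rewrite subr_ge0 ltW | exact: exprn_ge0].
rewrite -mulr_sumr; apply: ler_wpM2l; first by rewrite subr_ge0 ltW.
by have := geom_sum_le (b i * C) n; rewrite q0 hbC => /(_ isT).
Qed.

Lemma sum_sub (T : eqType) (s t : seq T) (f : T -> R) : uniq s -> uniq t ->
  {subset s <= t} -> (forall x, 0 <= f x) -> \sum_(i <- s) f i <= \sum_(i <- t) f i.
Proof.
move=> us ut st f0.
have p : perm_eq s [seq i <- t | i \in s].
  apply: uniq_perm => //; first exact: filter_uniq.
  move=> x; rewrite mem_filter; case xs: (x \in s) => //=; by rewrite (st _ xs).
rewrite (perm_big _ p) big_filter [X in _ <= X](bigID (fun i => i \in s)) /= lerDl.
exact: sumr_ge0.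
Qed.

Lemma Cprops (b : 'I_N -> R) (c : R) : (forall i, 0 < b i < 1) -> 0 < c ->
  (forall i, b i * c < 1) -> 0 <= Num.max 1 c /\ forall i, b i * Num.max 1 c < 1.
Proof.
move=> hb c0 hbc; case: (leP 1 c) => h; split => //; try exact: ltW c0.
by move=> i; rewrite mulr1; case/andP: (hb i).
Qed.

Lemma list_bound (b : 'I_N -> R) (c1 c2 : R)
  (s : seq ({ffun 'I_N -> nat} * {ffun 'I_N -> nat})) :
  (0 < N)%N -> (forall i, 0 < b i < 1) -> 0 < c1 -> 0 < c2 ->
  (forall i, b i * c1 < 1) -> (forall i, b i * c2 < 1) -> uniq s ->
  \sum_(z <- s) (walk_prob b z.1 * walk_prob b z.2 * V c1 c2 z.1 z.2)
   <= Kc b (Num.max 1 c2) * Kc b (Num.max 1 c1).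
Proof.
move=> N0 hb c10 c20 hb1 hb2 us.
have [C10 hC1] := @Cprops b c1 hb c10 hb1.
have [C20 hC2] := @Cprops b c2 hb c20 hb2.
set C1 := Num.max 1 c1 in C10 hC1 *.
set C2 := Num.max 1 c2 in C20 hC2 *.
set n := (\max_(z <- s) \max_(i < N) maxn (z.1 i) (z.2 i)).+1.
have hn : forall z, z \in s -> forall i, (z.1 i < n)%N /\ (z.2 i < n)%N.
  move=> z zs i.
  have h1 : (\max_(i < N) maxn (z.1 i) (z.2 i) <=
     \max_(z <- s) \max_(i < N) maxn (z.1 i) (z.2 i))%N.
    exact: (@leq_bigmax_seq _ s predT (fun z : {ffun 'I_N -> nat} * {ffun 'I_N -> nat} => \max_(i < N) maxn (z.1 i) (z.2 i)) z zs isT).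
  have h2 : (maxn (z.1 i) (z.2 i) <= \max_(i < N) maxn (z.1 i) (z.2 i))%N.
    exact: (@leq_bigmax _ (fun i => maxn (z.1 i) (z.2 i)) i).
  rewrite /n; move: h1 h2; set A := (\max_(i < N) _)%N; set B := (\max_(z <- s) _)%N => h1 h2; split; lia.
set t := [seq emb y | y <- index_enum {ffun 'I_N -> 'I_n}].
have ut : uniq t.
  rewrite map_inj_uniq ?index_enum_uniq // => y1 y2 h.
  apply/ffunP => i; apply: val_inj.
  by have := congr1 (fun f : {ffun 'I_N -> nat} => f i) h; rewrite /emb !ffunE.
have intt : forall x : {ffun 'I_N -> nat}, (forall i, (x i < n)%N) -> x \in t.
  move=> x hx; apply/mapP; exists [ffun i => Ordinal (hx i)]; first by rewrite mem_index_enum.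
  by apply/ffunP => i; rewrite /emb !ffunE.
set tt := [seq (x, y) | x <- t, y <- t].
have utt : uniq tt.
  by apply: allpairs_uniq => // -[a1 a2] [d1 d2] _ _ /= [-> ->].
set f := fun (C : R) (x : {ffun 'I_N -> nat}) => walk_prob b x * C ^+ walk x N.
have f0 : forall C x, 0 <= C -> 0 <= f C x.
  by move=> C x C0; apply: mulr_ge0; [exact: walk_prob_ge0 | exact: exprn_ge0].
apply: (@le_trans _ _ (\sum_(z <- s) (f C2 z.1 * f C1 z.2))).
  apply: ler_sum => z _.
  have p0 : 0 <= walk_prob b z.1 * walk_prob b z.2.
    by apply: mulr_ge0; exact: walk_prob_ge0.
  apply: (le_trans (ler_wpM2l p0 (V_bound c1 c2 z.1 z.2 N0 c10 c20)) _).
  by rewrite /f -/C1 -/C2 le_eqVlt; apply/orP; left; apply/eqP; ring.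
apply: (@le_trans _ _ (\sum_(z <- tt) (f C2 z.1 * f C1 z.2))).
  apply: sum_sub => //; last by move=> z; apply: mulr_ge0; apply: f0.
  move=> [x y] zs; apply: allpairs_f; apply: intt => i; have := hn _ zs i; simpl; tauto.
have -> : \sum_(z <- tt) (f C2 z.1 * f C1 z.2) = (\sum_(x <- t) f C2 x) * (\sum_(y <- t) f C1 y).
  rewrite big_allpairs mulr_suml; apply: eq_bigr => x _; by rewrite mulr_sumr.
rewrite !big_map.
apply: ler_pM.
- by apply: sumr_ge0 => y _; apply: f0.
- by apply: sumr_ge0 => y _; apply: f0.
- exact: (box_bound b C2 n hb C20 hC2).
- exact: (box_bound b C1 n hb C10 hC1).
Qed.

End Aux.
Arguments Kc {R N}.

Theorem proposition2p18 (R : realType) (N : nat) (b : 'I_N -> R) (c1 c2 : R) :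
  (0 < N)%N ->
  (forall i, 0 < b i < 1) ->
  0 < c1 -> 0 < c2 ->
  (forall i j, b i * b j < 1) ->
  (forall i, b i * c1 < 1) ->
  (forall i, b i * c2 < 1) ->
  (E_GRW_V b c1 c2 < +oo)%E.
Proof.
move=> N0 hb c10 c20 _ hb1 hb2.
rewrite /E_GRW_V.
apply: (le_lt_trans _ (ltry (Kc b (Num.max 1 c2) * Kc b (Num.max 1 c1))%R)).
apply: ge_ereal_sup => _ [A [finA _] <-].
rewrite fsbig_finite // sumEFin lee_fin.
apply: list_bound => //; exact: finmap.fset_uniq.
Qed.
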